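(* Let $q=p^{m_0}$ with $p$ prime, let $L$ be a finite extension of $\mathbb{F}_q((1/\theta))$ with ring of integers $\mathcal O$, and let $\rho$ be a permutation of $\{0,1,2,\ldots\}$. Let $f:\mathbb{Z}_p\to\mathcal O$ be continuous with Mahler expansion $f(y)=\sum_{j\ge0}c_j\binom{y}{j}$ (where $c_j\in\mathcal O$, $c_j\to0$). Then $$f^{\rho_1}(y)=\sum_{j\ge0}c_j\binom{y}{\rho_\ast j}.$$
   Context: For $y\in\mathbb{Z}_p$ written $q$-adically as $y=\sum_{j\ge0}c_jq^j$ with $0\le c_j<q$, set $\rho_\ast y:=\sum_{j\ge0}c_jq^{\rho(j)}$; this is a homeomorphism of $\mathbb{Z}_p$ stabilizing the nonnegative integers. Binomial coefficients $\binom{y}{j}$ are viewed as functions $\mathbb{Z}_p\to\mathcal O$ via reduction modulo $p$; every continuous $f:\mathbb{Z}_p\to\mathcal O$ has a unique such (Mahler) expansion with coefficients tending to $0$. Define $f^{\rho_1}(y):=f(\rho_\ast^{-1}y)$. *)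

(* Defs.v *)
From mathcomp Require Import all_boot all_order all_algebra.
From mathcomp Require Import reals.

Set Implicit Arguments.
Unset Strict Implicit.
Unset Printing Implicit Defensive.

Import Order.TTheory GRing.Theory Num.Theory.
Local Open Scope ring_scope.

(* The p-adic integers Z_p, modelled as coherent sequences of residues:      *)
(* (y n is the residue of y modulo p^n; this is the inverse limit Z_p.)      *)
Definition is_Zp (p : nat) (y : nat -> nat) : Prop :=
  (forall n, (y n < p ^ n)%N) /\ (forall n, (y n.+1 %% p ^ n)%N = y n).

(* k-th q-adic digit of y in Z_p, where q = p^m0 :  (y mod q^(k+1)) div q^k *)
Definition qdigit (m0 q : nat) (y : nat -> nat) (k : nat) : nat :=
  ((y (m0 * k.+1) %/ q ^ k) %% q)%N.

(* The element sum_k d_k q^k of Z_p (for digits 0 <= d_k < q, q = p^m0). *)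
Definition zp_of_digits (p q : nat) (d : nat -> nat) : nat -> nat :=
  fun n => ((\sum_(k < n) d k * q ^ k) %% p ^ n)%N.

(* rho_* y := sum_j c_j q^(rho j) where y = sum_j c_j q^j; its digit at
   position k is c_(rho^{-1} k).  The permutation rho of nat is given together
   with its inverse rho_inv. *)
Definition rho_star (p m0 q : nat) (rho rho_inv : nat -> nat)
    (y : nat -> nat) : nat -> nat :=
  zp_of_digits p q (fun k => qdigit m0 q y (rho_inv k)).

(* rho_* on a nonnegative integer j (j < q^(j+1), so j+1 digits suffice). *)
Definition rho_star_nat (q : nat) (rho : nat -> nat) (j : nat) : nat :=
  (\sum_(k < j.+1) ((j %/ q ^ k) %% q) * q ^ (rho k))%N.

(* f^{rho_1}(y) := f (rho_*^{-1} y) ; rho_*^{-1} = (rho^{-1})_* . *)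
Definition f_rho1 (L : Type) (p m0 q : nat) (rho rho_inv : nat -> nat)
    (f : (nat -> nat) -> L) (y : nat -> nat) : L :=
  f (rho_star p m0 q rho_inv rho y).

(* binom(y, j) : Z_p -> O via reduction mod p.  The residue of binom(y,j)
   mod p only depends on y mod p^(j+1) (as p^(j+1) > j), so it is the
   residue of the integer binomial 'C(y_(j+1), j) mod p, viewed in L. *)
Definition binomZp (L : nzRingType) (p : nat) (y : nat -> nat) (j : nat) : L :=
  (('C(y j.+1, j) %% p)%N)%:R.

Definition nonarch_abs (R : realType) (L : fieldType) (absv : L -> R) : Prop :=
  [/\ forall x, 0 <= absv x,
      forall x, absv x = 0 <-> x = 0,
      forall x y, absv (x * y) = absv x * absv y &
      forall x y, absv (x + y) <= Num.max (absv x) (absv y)].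

Definition abs_nontrivial (R : realType) (L : fieldType) (absv : L -> R) : Prop :=
  exists x, absv x != 0 /\ absv x != 1.

Definition cauchy_seq (R : realType) (L : fieldType) (absv : L -> R)
    (u : nat -> L) : Prop :=
  forall eps : R, 0 < eps -> exists N, forall m n, (N <= m)%N -> (N <= n)%N ->
    absv (u m - u n) < eps.

Definition seq_to (R : realType) (L : fieldType) (absv : L -> R)
    (u : nat -> L) (l : L) : Prop :=
  forall eps : R, 0 < eps -> exists N, forall n, (N <= n)%N -> absv (l - u n) < eps.

Definition abs_complete (R : realType) (L : fieldType) (absv : L -> R) : Prop :=
  forall u, cauchy_seq absv u -> exists l, seq_to absv u l.

Definition series_to (R : realType) (L : fieldType) (absv : L -> R)
    (a : nat -> L) (s : L) : Prop :=
  seq_to absv (fun n => \sum_(j < n) a j) s.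

Definition Zp_continuous (R : realType) (L : fieldType) (absv : L -> R)
    (p : nat) (f : (nat -> nat) -> L) : Prop :=
  forall y, is_Zp p y -> forall eps : R, 0 < eps -> exists n,
    forall z, is_Zp p z -> z n = y n -> absv (f z - f y) < eps.

Definition mahler_expansion (R : realType) (L : fieldType) (absv : L -> R)
    (p : nat) (f : (nat -> nat) -> L) (c : nat -> L) : Prop :=
  [/\ forall j, absv (c j) <= 1,
      seq_to absv c 0 &
      forall y, is_Zp p y -> series_to absv (fun j => c j * binomZp L p y j) (f y)].

(* Main.v *)
Require Import Defs.
From mathcomp Require Import all_boot all_order all_algebra.
From mathcomp Require Import reals.
From mathcomp Require Import zify.
From Stdlib Require Import FunctionalExtensionality.

Import Order.TTheory GRing.Theory Num.Theory.
Local Open Scope ring_scope.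
Section Lucas.
Variables (p : nat) (L : fieldType).
Hypothesis hp : prime p.
Hypothesis hchar : p \in [pchar L].



Lemma coefX1n n k : (('X + 1 : {poly L})^+n)`_k = ('C(n,k))%:R.
Proof.
rewrite exprD1n coef_sum.
rewrite (eq_bigr (fun i : 'I_n.+1 => if (i == k :> nat) then ('C(n,i))%:R else 0)); last first.
  by move=> i _; rewrite coefMn coefXn eq_sym; case: eqP => _; rewrite ?mulr1n ?mul0rn.
rewrite -big_mkcond (big_ord1_eq _ (fun i => ('C(n,i))%:R : L)).
case: ltnP => // hk; by rewrite bin_small.
Qed.

Lemma frobX1 m : ('X + 1 : {poly L})^+(p^m) = 'X^(p^m) + 1.
Proof.
elim: m => [|m IH]; first by rewrite expn0 !expr1.
rewrite expnSr exprM IH exprDn_pchar ?expr1n -?exprM //.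
by rewrite pnatE // pchar_poly.
Qed.

Lemma coefXQ1 Q a i : (0 < Q)%N ->
  (('X^Q + 1 : {poly L})^+a)`_i = if (Q %| i)%N then ('C(a, i %/ Q))%:R else 0.
Proof.
move=> hQ.
have -> : ('X^Q + 1 : {poly L})^+a = (('X + 1)^+a) \Po 'X^Q.
  by rewrite rmorphXn /= comp_polyD comp_polyX -polyC1 comp_polyC.
by rewrite coef_comp_poly_Xn // coefX1n.
Qed.

Lemma lucas1 m a r b s : (r < p ^ m)%N -> (s < p ^ m)%N ->
  ('C(a * p ^ m + r, b * p ^ m + s))%:R = ('C(a, b))%:R * ('C(r, s))%:R :> L.
Proof.
set Q := (p ^ m)%N => hr hs.
have hQ : (0 < Q)%N by rewrite expn_gt0 prime_gt0.
rewrite -coefX1n exprD (mulnC a) exprM frobX1 -/Q coefMr.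
have hsi : (s < (b * Q + s).+1)%N by rewrite ltnS leq_addl.
rewrite (bigD1 (Ordinal hsi)) //= big1; first last.
- move=> [t ht] /= hts.
  rewrite coefX1n coefXQ1 //.
  case: (leqP t r) => htr; last by rewrite (bin_small htr) mulr0.
  case: dvdnP => [[k hk]|]; last by rewrite mul0r.
  exfalso; move/negP: hts; apply; apply/eqP/val_inj => /=.
  have := ht; rewrite ltnS => ht'.
  case: (ltngtP k b) => hkb.
  + have : (k.+1 * Q <= b * Q)%N by rewrite leq_mul2r hkb orbT.
    rewrite mulSn; lia.
  + have : (b.+1 * Q <= k * Q)%N by rewrite leq_mul2r hkb orbT.
    rewrite mulSn; lia.
  + subst k; lia.
rewrite addr0 coefX1n coefXQ1 ?addnK ?dvdn_mull // mulnK //.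
Qed.

Lemma binom_modp m a b : (b < p ^ m)%N ->
  ('C(a %% p ^ m, b))%:R = ('C(a, b))%:R :> L.
Proof.
move=> hb.
have hP : (0 < p ^ m)%N by rewrite expn_gt0 prime_gt0.
have := @lucas1 m (a %/ p ^ m) _ 0%N _ (ltn_pmod a hP) hb.
by rewrite mul0n add0n -divn_eq bin0 mul1r => ->.
Qed.

Variable m0 : nat.
Hypothesis hm0 : (0 < m0)%N.
Local Notation q := (p ^ m0)%N.
Definition dig (k a : nat) : nat := ((a %/ q ^ k) %% q)%N.

Lemma q_gt1 : (1 < q)%N.
Proof. by rewrite -(expn0 p) ltn_exp2l ?prime_gt1. Qed.
Lemma q_gt0 : (0 < q)%N.
Proof. by rewrite expn_gt0 prime_gt0. Qed.

Lemma lucas_dig K : forall a b, (b < q ^ K)%N ->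
  ('C(a, b))%:R = \prod_(k < K) ('C(dig k a, dig k b))%:R :> L.
Proof.
elim: K => [|K IH] a b hb.
  by move: hb; rewrite expn0 ltnS leqn0 => /eqP ->; rewrite bin0 big_ord0.
rewrite big_ord_recl {1}(divn_eq a q) {1}(divn_eq b q).
rewrite lucas1 ?ltn_pmod ?q_gt0 // IH; last by rewrite ltn_divLR ?q_gt0 // -expnSr.
rewrite /dig expn0 !divn1 mulrC; congr (_ * _).
apply: eq_bigr => i _; rewrite lift0.
by rewrite expnS !divnMA.
Qed.

Lemma dig_sum i : forall K (d : nat -> nat), (forall k, d k < q)%N -> (i < K)%N ->
  dig i (\sum_(k < K) d k * q ^ k)%N = d i.
Proof.
elim: i => [|i IH] [|K] d hd hi //.
  rewrite big_ord_recl /dig /= expn0 divn1 muln1.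
  rewrite (eq_bigr (fun k : 'I_K => d (lift ord0 k) * q ^ k * q)%N); last first.
    by move=> k _; rewrite lift0; rewrite expnS mulnCA mulnC.
  by rewrite -big_distrl /= addnC modnMDl modn_small.
rewrite big_ord_recl /dig.
rewrite (eq_bigr (fun k : 'I_K => d (lift ord0 k) * q ^ k * q)%N); last first.
  by move=> k _; rewrite lift0; rewrite expnS mulnCA mulnC.
rewrite -big_distrl /= expn0 muln1 expnS divnMA addnC divnMDl ?q_gt0 //.
rewrite (divn_small (hd 0%N)) addn0.
exact: (IH K (fun k => d k.+1)).
Qed.

Lemma sum_lt M (e : nat -> nat) : (forall i, e i < q)%N ->
  (\sum_(i < M) e i * q ^ i < q ^ M)%N.
Proof.
move=> he; elim: M => [|M IH]; first by rewrite big_ord0 expn0.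
rewrite big_ord_recr /= expnS.
have := leq_mul (he M) (leqnn (q ^ M)); rewrite mulSn.
move: IH; move: (q ^ M)%N (e M) (\sum_(i < M) e i * q ^ i)%N => Q E S; lia.
Qed.

End Lucas.

From Stdlib Require Import FunctionalExtensionality.

Lemma big_reindex (R : Type) (idx : R) (op : Monoid.com_law idx)
  (F : nat -> nat -> R) (g rho rho_inv : nat -> nat) M J :
  cancel rho rho_inv -> cancel rho_inv rho -> (forall i, F i 0%N = idx) ->
  (forall k, (k < J)%N -> (rho k < M)%N) ->
  \big[op/idx]_(i < M) F i (if (rho_inv i < J)%N then g (rho_inv i) else 0%N)
  = \big[op/idx]_(k < J) F (rho k) (g k).
Proof.
move=> h1 h2 hF; elim: J => [|J IH] hJ.
  by rewrite big_ord0 big1 // => i _; rewrite ltn0.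
rewrite big_ord_recr /= -IH; last by move=> k hk; apply: hJ; apply: ltnW.
rewrite (eq_bigr (fun i : 'I_M => op (F i (if (rho_inv i < J)%N then g (rho_inv i) else 0%N))
   (if (i == rho J :> nat) then F i (g J) else idx))); last first.
  move=> i _; case: (eqVneq (nat_of_ord i) (rho J)) => [hi|hi].
    by rewrite hi h1 ltnn ltnSn hF Monoid.mul1m.
  have hne : rho_inv i != J by apply: contraNneq hi => <-; rewrite h2.
  by rewrite ltnS leq_eqVlt (negbTE hne) Monoid.mulm1.
by rewrite big_split /= -big_mkcond (big_ord1_eq _ (fun i => F i (g J))) hJ.
Qed.

Lemma zp_coh p y n K : is_Zp p y -> (n <= K)%N -> (y K %% p ^ n)%N = y n.
Proof.
move=> [hlt hc]; elim: K => [|K IH] hn.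
  by move: hn; rewrite leqn0 => /eqP ->; rewrite modn_small.
case: (ltngtP n K.+1) => h; last 1 first.
- by subst n; rewrite modn_small.
- rewrite ltnS in h.
  by rewrite -(modn_dvdm (y K.+1) (dvdn_exp2l p h)) hc IH.
- by move: hn; rewrite leqNgt h.
Qed.

Lemma dig_coh p m0 y i K : is_Zp p y -> (m0 * i.+1 <= K)%N ->
  dig p m0 i (y K) = qdigit m0 (p ^ m0) y i.
Proof.
move=> hy hK; rewrite /dig /qdigit !modn_divl -!expnS.
by rewrite -(@zp_coh p y _ _ hy hK) -expnM modn_mod.
Qed.

Lemma zp_of_digits_Zp p m0 d : prime p -> (0 < m0)%N ->
  is_Zp p (zp_of_digits p (p ^ m0) d).
Proof.
move=> hp hm0; split => n.
  by rewrite /zp_of_digits ltn_pmod // expn_gt0 prime_gt0.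
rewrite /zp_of_digits (modn_dvdm _ (dvdn_exp2l p (leqnSn n))) big_ord_recr /=.
have hn : (n <= m0 * n)%N by rewrite leq_pmull.
rewrite -expnM -(subnK hn) expnD mulnA addnC.
by rewrite modnMDl.
Qed.
Theorem corollary7p4
  (p m0 q : nat) (hp : prime p) (hm0 : (0 < m0)%N) (hq : q = (p ^ m0)%N)
  (R : realType) (L : fieldType) (absv : L -> R)
  (hchar : p \in [pchar L])
  (habs : nonarch_abs absv) (hnt : abs_nontrivial absv)
  (hcomp : abs_complete absv)
  (rho rho_inv : nat -> nat)
  (hrho1 : cancel rho rho_inv) (hrho2 : cancel rho_inv rho)
  (f : (nat -> nat) -> L)
  (hfO : forall y, is_Zp p y -> absv (f y) <= 1)
  (hfc : Zp_continuous absv p f)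
  (c : nat -> L) (hmahler : mahler_expansion absv p f c) :
  forall y, is_Zp p y ->
    series_to absv
      (fun j => c j * binomZp L p y (rho_star_nat q rho j))
      (f_rho1 p m0 q rho rho_inv f y).
Proof.
move=> y hy; subst q.
case: hmahler => _ _ hser.
set z := rho_star p m0 (p ^ m0) rho_inv rho y.
have hz : is_Zp p z by rewrite /z /rho_star; apply: zp_of_digits_Zp.
rewrite /f_rho1 -/z.
suff -> : (fun j => c j * binomZp L p y (rho_star_nat (p ^ m0) rho j))
        = (fun j => c j * binomZp L p z j) by apply: hser.
apply: functional_extensionality => j; congr (_ * _).
rewrite /binomZp !(GRing.natr_mod_pchar hchar).
have hq0 : (0 < p ^ m0)%N by rewrite expn_gt0 prime_gt0.
have hq1 : (1 < p ^ m0)%N by rewrite -(expn0 p) ltn_exp2l ?prime_gt1.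
set w := fun i => qdigit m0 (p ^ m0) y i.
have hw : forall i, (w i < p ^ m0)%N by move=> i; apply: ltn_pmod.
have hltp : forall n, (n < p ^ n.+1)%N.
  move=> n; apply: (@ltn_trans n.+1) => //; apply: ltn_expl; exact: prime_gt1.
have hltq : forall n, (n < (p ^ m0) ^ n.+1)%N.
  move=> n; apply: (@ltn_trans n.+1) => //; exact: ltn_expl.
have -> : ('C(z j.+1, j))%:R
    = \prod_(k < j.+1) ('C(w (rho k), dig p m0 k j))%:R :> L.
  rewrite /z /rho_star /zp_of_digits (binom_modp p L hp hchar) //.
  rewrite (lucas_dig p L hp hchar m0 j.+1) //.
  apply: eq_bigr => k _; rewrite (dig_sum p hp m0 k j.+1 (fun k => w (rho k))) //.
set N := rho_star_nat (p ^ m0) rho j.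
set M := (\sum_(k < j.+1) (rho k).+1)%N.
have hM : forall k, (k < j.+1)%N -> (rho k < M)%N.
  move=> k hk; rewrite /M (bigD1 (Ordinal hk)) //=; lia.
set e := fun i => if (rho_inv i < j.+1)%N then dig p m0 (rho_inv i) j else 0%N.
have he : forall i, (e i < p ^ m0)%N.
  by move=> i; rewrite /e; case: ifP => _ //; apply: ltn_pmod.
have hNe : N = (\sum_(i < M) e i * (p ^ m0) ^ i)%N.
  symmetry; rewrite /N /rho_star_nat /e.
  exact: (big_reindex _ _ _ (fun i x => x * (p ^ m0) ^ i)%N
            (fun k => dig p m0 k j) rho rho_inv M j.+1 hrho1 hrho2 (fun i => mul0n _) hM).
have hNlt : (N < (p ^ m0) ^ M)%N by rewrite hNe; apply: (sum_lt p L hp hchar m0 hm0).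
rewrite -(zp_coh p y N.+1 (N.+1 + m0 * M)%N hy) ?leq_addr //.
rewrite (binom_modp p L hp hchar) //.
rewrite (lucas_dig p L hp hchar m0 M) //.
rewrite (eq_bigr (fun i : 'I_M => ('C(w i, e i))%:R)); last first.
  move=> i _; rewrite (dig_coh p m0 y i (N.+1 + m0 * M)%N hy); last first.
    apply: leq_trans (leq_addl _ _); rewrite leq_mul2l ltn_ord orbT //.
  by rewrite hNe (dig_sum p hp m0 i M e).
have h0 : forall i, ('C(w i, 0%N))%:R = 1 :> L by move=> i; rewrite bin0.
exact: (big_reindex _ _ _ (fun i x => ('C(w i, x))%:R : L)
          (fun k => dig p m0 k j) rho rho_inv M j.+1 hrho1 hrho2 h0 hM).
Qed.
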